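(* Setting: $n$ agents on a connected, undirected weighted graph with Laplacian $L_n$; $L=L_n\otimes I_m$. For each $i$, $\Omega_i\subset\mathbb R^{q_i}$ is closed and convex, $f^i$ is strictly convex on an open set containing $\Omega_i$, $W_i\in\mathbb R^{m\times q_i}$, $d_i\in\mathbb R^m$ with $\sum_id_i=d_0$; $\Omega=\prod_i\Omega_i$, $f(x)=\sum_if^i(x_i)$, $W=[W_1,\dots,W_n]$, $\overline W=\mathrm{diag}\{W_1,\dots,W_n\}$, $d=[d_1^{\rm T},\dots,d_n^{\rm T}]^{\rm T}$; Slater's condition holds. Let $$\mathcal F(x,\lambda,z)=\Big\{\big(p,\ d-\overline Wx-L\lambda-Lz-\overline Wp,\ L\lambda\big):\ p=P_\Omega[x-g+\overline W^{\rm T}\lambda]-x,\ g\in\partial f(x)\Big\}$$ and assume $\mathcal F(x,\lambda,z)$ is convex for all $(x,\lambda,z)\in\Omega\times\mathbb R^{nm}\times\mathbb R^{nm}$. Let $(x^*,\lambda^*,z^* )\in\Omega\times\mathbb R^{nm}\times\mathbb R^{nm}$ be an equilibrium ($0\in\mathcal F(x^*,\lambda^*,z^* )$) and $$V(x,\lambda,z)=f(x)-f(x^* )+(\lambda^* )^{\rm T}(d-\overline Wx)+\tfrac12\|x-x^*\|^2+\tfrac12\|\lambda-\lambda^*\|^2+\tfrac12\|z-z^*\|^2.$$ If $a\in\mathcal L_{\mathcal F}V(x,\lambda,z)$, then there exist $g(x)\in\partial f(x)$ and $g(x^* )\in\partial f(x^* )$ such that $$a\le-\|p\|^2-(x-x^*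 )^{\rm T}(g(x)-g(x^* ))-\lambda^{\rm T}L\lambda\le0,\qquad p=P_\Omega[x-g(x)+\overline W^{\rm T}\lambda]-x.$$
   Context: $\partial f$ is the convex subdifferential; $P_\Omega$ the Euclidean projection onto $\Omega$. For a locally Lipschitz $V$ with Clarke generalized gradient $\partial V$, the set-valued Lie derivative is $\mathcal L_{\mathcal F}V(\xi)=\{a\in\mathbb R:\ \exists v\in\mathcal F(\xi)\text{ with } p^{\rm T}v=a\ \forall p\in\partial V(\xi)\}$. *)

(* Defs.v *)
(* abstract reals R : realType; finite-dimensional Euclidean
   spaces are represented as functions  T -> R  on a finite index type T,
   with the standard inner product  dot u v = \sum_k u k * v k. *)
From HB Require Import structures.
From mathcomp Require Import all_boot all_order all_algebra.
From mathcomp Require Import reals.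
Set Implicit Arguments. Unset Strict Implicit. Unset Printing Implicit Defensive.
Import Order.TTheory GRing.Theory Num.Theory.
Local Open Scope ring_scope.

Definition dot {R : realType} {T : finType} (u v : T -> R) : R :=
  \sum_(k : T) u k * v k.
Definition sqn {R : realType} {T : finType} (u : T -> R) : R := dot u u.
Definition vsub {R : realType} {T : finType} (u v : T -> R) : T -> R :=
  fun k => u k - v k.

Definition convex_set {R : realType} {T : finType} (C : (T -> R) -> Prop) :=
  forall u v, C u -> C v -> forall t : R, 0 <= t -> t <= 1 ->
    C (fun k => t * u k + (1 - t) * v k).

Definition open_set {R : realType} {T : finType} (U : (T -> R) -> Prop) :=
  forall x, U x -> exists2 e : R, 0 < e & forall y, sqn (vsub y x) < e -> U y.

Definition closed_set {R : realType} {T : finType} (C : (T -> R) -> Prop) :=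
  forall y, (forall e : R, 0 < e -> exists2 c, C c & sqn (vsub y c) < e) -> C y.

Definition strictly_convex_on {R : realType} {T : finType}
    (U : (T -> R) -> Prop) (f : (T -> R) -> R) :=
  forall u v, U u -> U v -> u <> v -> forall t : R, 0 < t -> t < 1 ->
    f (fun k => t * u k + (1 - t) * v k) < t * f u + (1 - t) * f v.

Definition aff_hull {R : realType} {T : finType} (C : (T -> R) -> Prop)
    (y : T -> R) :=
  exists (N : nat) (pts : 'I_N -> T -> R) (w : 'I_N -> R),
    [/\ forall j, C (pts j), \sum_(j < N) w j = 1 &
        forall k, y k = \sum_(j < N) w j * pts j k].

Definition relint {R : realType} {T : finType} (C : (T -> R) -> Prop)
    (x : T -> R) :=
  C x /\ exists2 e : R, 0 < e &
    forall y, aff_hull C y -> sqn (vsub y x) < e -> C y.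

Definition subdiff {R : realType} {T : finType} (D : (T -> R) -> Prop)
    (f : (T -> R) -> R) (x g : T -> R) :=
  forall y, D y -> f x + dot g (vsub y x) <= f y.

Definition is_proj {R : realType} {T : finType} (C : (T -> R) -> Prop)
    (y p : T -> R) :=
  C p /\ forall w, C w -> sqn (vsub y p) <= sqn (vsub y w).

(* Clarke generalized gradient: p \in dV(xi) iff for every direction v,
   p^T v <= V°(xi; v) := limsup_{y -> xi, t -> 0+} (V(y + t v) - V(y)) / t,
   the limsup inequality being written out in epsilon-delta form. *)
Definition clarke_grad {R : realType} {T : finType} (V : (T -> R) -> R)
    (xi p : T -> R) :=
  forall v : T -> R, forall e : R, 0 < e -> forall delta : R, 0 < delta ->
    exists y : T -> R, exists t : R,
      [/\ sqn (vsub y xi) < delta, 0 < t, t < delta &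
          dot p v - e < (V (fun k => y k + t * v k) - V y) / t].

Definition lie_deriv {R : realType} {T : finType}
    (F : (T -> R) -> (T -> R) -> Prop) (V : (T -> R) -> R) (xi : T -> R)
    (a : R) :=
  exists2 v, F xi v & forall p, clarke_grad V xi p -> dot p v = a.

(* index of the stacked decision variable x = (x_1,...,x_n), x_i in R^{q_i} *)
Definition Xidx (n : nat) (q : 'I_n -> nat) : finType := {i : 'I_n & 'I_(q i)}.
(* index of R^{nm} = (R^m)^n *)
Definition Lidx (n m : nat) : finType := ('I_n * 'I_m)%type.
(* state space index for (x, lambda, z) *)
Definition Sidx (n m : nat) (q : 'I_n -> nat) : finType :=
  (Xidx q + (Lidx n m + Lidx n m))%type.

Definition blk {R : realType} {n : nat} {q : 'I_n -> nat}
    (x : Xidx q -> R) (i : 'I_n) : 'I_(q i) -> R :=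
  fun l => x (@Tagged 'I_n i (fun i => 'I_(q i)) l).
Arguments blk {R n q} x i _.

Definition pack {R : realType} {n m : nat} {q : 'I_n -> nat}
    (x : Xidx q -> R) (lam z : Lidx n m -> R) : Sidx m q -> R :=
  fun s => match s with
           | inl a => x a
           | inr (inl b) => lam b
           | inr (inr b) => z b
           end.
Definition xpart {R : realType} {n m : nat} {q : 'I_n -> nat}
    (xi : Sidx m q -> R) : Xidx q -> R := fun a => xi (inl a).
Definition lpart {R : realType} {n m : nat} {q : 'I_n -> nat}
    (xi : Sidx m q -> R) : Lidx n m -> R := fun b => xi (inr (inl b)).
Definition zpart {R : realType} {n m : nat} {q : 'I_n -> nat}
    (xi : Sidx m q -> R) : Lidx n m -> R := fun b => xi (inr (inr b)).

Definition undirected_weighted_graph {R : realType} {n : nat} (A : 'M[R]_n) :=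
  [/\ forall i j, A i j = A j i, forall i j, 0 <= A i j & forall i, A i i = 0].
Definition graph_connected {R : realType} {n : nat} (A : 'M[R]_n) :=
  forall i j : 'I_n, connect [rel k l | 0 < A k l] i j.
Definition laplacian {R : realType} {n : nat} (A : 'M[R]_n) : 'M[R]_n :=
  \matrix_(i, j) (if i == j then \sum_(k < n) A i k else - A i j).

(* L = L_n (x) I_m acting on R^{nm} *)
Definition Lkron {R : realType} {n m : nat} (Ln : 'M[R]_n)
    (lam : Lidx n m -> R) : Lidx n m -> R :=
  fun ik => \sum_(j < n) Ln ik.1 j * lam (j, ik.2).

(* Wbar = diag{W_1,...,W_n} : R^{sum q_i} -> R^{nm} and its transpose *)
Definition Wbar {R : realType} {n m : nat} {q : 'I_n -> nat}
    (W : forall i, 'M[R]_(m, q i)) (x : Xidx q -> R) : Lidx n m -> R :=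
  fun ik => \sum_(l < q ik.1) W ik.1 ik.2 l * blk x (ik.1) l.
Definition WbarT {R : realType} {n m : nat} {q : 'I_n -> nat}
    (W : forall i, 'M[R]_(m, q i)) (lam : Lidx n m -> R) : Xidx q -> R :=
  fun il => \sum_(k < m) W (tag il) k (tagged il) * lam (tag il, k).
(* W = [W_1,...,W_n] : R^{sum q_i} -> R^m *)
Definition Wrow {R : realType} {n m : nat} {q : 'I_n -> nat}
    (W : forall i, 'M[R]_(m, q i)) (x : Xidx q -> R) : 'I_m -> R :=
  fun k => \sum_(i < n) \sum_(l < q i) W i k l * blk x i l.

Definition Omega {R : realType} {n : nat} {q : 'I_n -> nat}
    (Om : forall i, ('I_(q i) -> R) -> Prop) (x : Xidx q -> R) :=
  forall i, Om i (blk x i).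
Definition fsum {R : realType} {n : nat} {q : 'I_n -> nat}
    (fi : forall i, ('I_(q i) -> R) -> R) (x : Xidx q -> R) : R :=
  \sum_(i < n) fi i (blk x i).

Definition Fmap {R : realType} {n m : nat} {q : 'I_n -> nat}
    (Ln : 'M[R]_n) (W : forall i, 'M[R]_(m, q i)) (d : Lidx n m -> R)
    (Om U : forall i, ('I_(q i) -> R) -> Prop)
    (fi : forall i, ('I_(q i) -> R) -> R)
    (xi v : Sidx m q -> R) : Prop :=
  let x := xpart xi in let lam := lpart xi in let z := zpart xi in
  exists g pi,
    [/\ subdiff (Omega U) (fsum fi) x g,
        is_proj (Omega Om) (fun a => x a - g a + WbarT W lam a) pi &
        let p := vsub pi x in
        v = pack p
              (fun b => d b - Wbar W x b - Lkron Ln lam b - Lkron Ln z b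
                        - Wbar W p b)
              (Lkron Ln lam)].

Definition Vfun {R : realType} {n m : nat} {q : 'I_n -> nat}
    (W : forall i, 'M[R]_(m, q i)) (d : Lidx n m -> R)
    (fi : forall i, ('I_(q i) -> R) -> R)
    (xs : Xidx q -> R) (ls zs : Lidx n m -> R) (xi : Sidx m q -> R) : R :=
  fsum fi (xpart xi) - fsum fi xs
  + dot ls (fun b => d b - Wbar W (xpart xi) b)
  + 2^-1 * sqn (vsub (xpart xi) xs)
  + 2^-1 * sqn (vsub (lpart xi) ls)
  + 2^-1 * sqn (vsub (zpart xi) zs).

(* Main.v *)
Require Import Defs.
From HB Require Import structures.
From mathcomp Require Import all_boot all_order all_algebra.
From mathcomp Require Import reals ring lra.
Import Order.TTheory GRing.Theory Num.Theory.
Local Open Scope ring_scope.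
Set Implicit Arguments. Unset Strict Implicit.

Section H.
Variable R : realType.

Lemma sumL n m (F : Lidx n m -> R) :
  \sum_(b : Lidx n m) F b = \sum_(i < n) \sum_(k < m) F (i, k).
Proof. by rewrite pair_bigA; apply: eq_bigr => -[i k]. Qed.

Lemma sumX n (q : 'I_n -> nat) (F : Xidx q -> R) :
  \sum_(b : Xidx q) F b = \sum_(i < n) \sum_(l < q i) F (Tagged (fun i => 'I_(q i)) l).
Proof. by rewrite sig_big_dep; apply: eq_bigr => -[i l]. Qed.

Lemma dot_pack n m (q : 'I_n -> nat) (a a' : Xidx q -> R) (b b' c c' : Lidx n m -> R) :
  dot (pack a b c) (pack a' b' c') = dot a a' + dot b b' + dot c c'.
Proof. by rewrite /dot big_sumType /= big_sumType /= addrA. Qed.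

Lemma Wbar_adj n m (q : 'I_n -> nat) (W : forall i, 'M[R]_(m, q i)) (mu : Lidx n m -> R) (w : Xidx q -> R) :
  dot mu (Wbar W w) = dot (WbarT W mu) w.
Proof.
rewrite /dot /Wbar /WbarT /blk /= sumL sumX.
apply: eq_bigr => i _ /=.
under eq_bigr do rewrite mulr_sumr.
rewrite exchange_big /=; apply: eq_bigr => l _; rewrite mulr_suml; apply: eq_bigr => k _; ring.
Qed.


Lemma lap_sym n (A : 'M[R]_n) : (forall i j, A i j = A j i) ->
  forall i j, laplacian A i j = laplacian A j i.
Proof. by move=> As i j; rewrite !mxE eq_sym; case: eqP => [->|] //; rewrite As. Qed.

Lemma Lsym n m (A : 'M[R]_n) (mu nu : Lidx n m -> R) : (forall i j, A i j = A j i) ->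
  dot mu (Lkron (laplacian A) nu) = dot nu (Lkron (laplacian A) mu).
Proof.
move=> As; rewrite /dot /Lkron !sumL /=.
rewrite [LHS]exchange_big [RHS]exchange_big /=; apply: eq_bigr => k _.
under eq_bigr do rewrite mulr_sumr.
under [RHS]eq_bigr do rewrite mulr_sumr.
rewrite exchange_big /=; apply: eq_bigr => i _; apply: eq_bigr => j _.
rewrite (lap_sym As); ring.
Qed.

Lemma lap_row n (A : 'M[R]_n) (a : 'I_n -> R) i : A i i = 0 ->
  \sum_(j < n) laplacian A i j * a j = (\sum_(l < n) A i l) * a i - \sum_(j < n) A i j * a j.
Proof.
move=> Aii; rewrite (bigD1 i) //= [X in _ = _ - X](bigD1 i) //= !mxE eqxx Aii mul0r add0r.
congr (_ + _); rewrite -sumrN; apply: eq_bigr => j /negPf ji.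
by rewrite mxE eq_sym ji mulNr.
Qed.

Lemma lap_psd1 n (A : 'M[R]_n) (a : 'I_n -> R) : undirected_weighted_graph A ->
  0 <= \sum_(i < n) a i * \sum_(j < n) laplacian A i j * a j.
Proof.
case=> As A0 Aii.
have E : \sum_(i < n) a i * \sum_(j < n) laplacian A i j * a j =
  \sum_(i < n) \sum_(j < n) A i j * (a i ^+ 2 - a i * a j).
  apply: eq_bigr => i _; rewrite lap_row // mulr_suml.
  rewrite mulrBr !mulr_sumr -sumrB; apply: eq_bigr => j _; ring.
have E2 : \sum_(i < n) \sum_(j < n) A i j * (a i ^+ 2 - a i * a j) =
  \sum_(i < n) \sum_(j < n) A i j * (a j ^+ 2 - a j * a i).
  rewrite exchange_big /=; apply: eq_bigr => i _; apply: eq_bigr => j _; by rewrite As.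
have : 0 <= \sum_(i < n) \sum_(j < n) A i j * (a i - a j) ^+ 2.
  by apply: sumr_ge0 => i _; apply: sumr_ge0 => j _; apply: mulr_ge0 => //; apply: sqr_ge0.
have E3 : \sum_(i < n) \sum_(j < n) A i j * (a i - a j) ^+ 2 =
   \sum_(i < n) \sum_(j < n) A i j * (a i ^+ 2 - a i * a j) +
   \sum_(i < n) \sum_(j < n) A i j * (a j ^+ 2 - a j * a i).
  rewrite -big_split /=; apply: eq_bigr => i _; rewrite -big_split /=; apply: eq_bigr => j _; ring.
rewrite E3 -E2 E; lra.
Qed.

Lemma Lpsd n m (A : 'M[R]_n) (mu : Lidx n m -> R) : undirected_weighted_graph A ->
  0 <= dot mu (Lkron (laplacian A) mu).
Proof.
move=> G; rewrite /dot /Lkron sumL exchange_big /=.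
apply: sumr_ge0 => k _; exact: (lap_psd1 (fun i => mu (i, k)) G).
Qed.

Lemma sqn_ge0 (T : finType) (u : T -> R) : 0 <= sqn u.
Proof. by apply: sumr_ge0 => k _; rewrite -expr2 sqr_ge0. Qed.


Lemma sqn_shift (T : finType) (u w c : T -> R) (t : R) :
  sqn (vsub (fun k => u k + t * w k) c) = sqn (vsub u c) + 2 * t * dot (vsub u c) w + t ^+ 2 * sqn w.
Proof.
rewrite /sqn /dot /vsub !mulr_sumr -!big_split /=; apply: eq_bigr => k _; ring.
Qed.

Lemma proj_vi (T : finType) (C : (T -> R) -> Prop) (y p w : T -> R) :
  convex_set C -> is_proj C y p -> C w -> dot (vsub y p) (vsub w p) <= 0.
Proof.
move=> Cc [Cp Pm] Cw.
set c := dot (vsub y p) (vsub w p); set N := sqn (vsub w p).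
have key : forall t, 0 < t -> t <= 1 -> 2 * c <= t * N.
  move=> t t0 t1.
  have := Pm _ (Cc _ _ Cw Cp t (ltW t0) t1).
  have -> : sqn (vsub y (fun k => t * w k + (1 - t) * p k)) =
            sqn (vsub y p) - 2 * t * c + t ^+ 2 * N.
    rewrite /c /N /sqn /dot /vsub !mulr_sumr -sumrB -big_split /=; apply: eq_bigr => k _; ring.
  move=> h.
  have h2 : t * (2 * c) <= t * (t * N) by lra.
  by rewrite ler_pM2l in h2.
rewrite leNgt; apply/negP => c0.
have N0 : 0 <= N by apply: sqn_ge0.
have Nc : 0 < N + c by lra.
have := key (c / (N + c)) (divr_gt0 c0 Nc).
rewrite ler_pdivrMr // mul1r => /(_ ltac:(lra)).
rewrite mulrAC ler_pdivlMr //.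
nra.
Qed.

Lemma ev_all (I : finType) (P : I -> R -> Prop) :
  (forall i, exists2 e : R, 0 < e & forall t, 0 < t -> t < e -> P i t) ->
  exists2 e : R, 0 < e & forall i t, 0 < t -> t < e -> P i t.
Proof.
move=> H.
suff : forall s : seq I, exists2 e : R, 0 < e & forall i t, i \in s -> 0 < t -> t < e -> P i t.
  case/(_ (enum I)) => e e0 He; exists e => // i t; apply: He; by rewrite mem_enum.
elim=> [|i s [e e0 He]]; first by exists 1 => //.
have [e1 e10 He1] := H i.
exists (Num.min e e1); first by rewrite lt_min e0 e10.
move=> j t; rewrite inE lt_min => /orP [/eqP -> | js] t0 /andP [te te1].
  exact: He1.
exact: He.
Qed.

Lemma dot_split n m (q : 'I_n -> nat) (u w : Sidx m q -> R) :
  dot u w = dot (xpart u) (xpart w) + dot (lpart u) (lpart w) + dot (zpart u) (zpart w).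
Proof. by rewrite /dot big_sumType /= big_sumType /= addrA. Qed.


Lemma Vdiff n m (q : 'I_n -> nat) (U : forall i : 'I_n, ('I_(q i) -> R) -> Prop)
    (fi : forall i : 'I_n, ('I_(q i) -> R) -> R)
    (W : forall i : 'I_n, 'M[R]_(m, q i)) (dv : Lidx n m -> R)
    (xs : Xidx q -> R) (ls zs : Lidx n m -> R)
    (xi v : Sidx m q -> R) (g : Xidx q -> R) (t : R) :
  0 < t -> Omega U (fun a => xpart xi a + t * xpart v a) ->
  subdiff (Omega U) (fsum fi) (xpart xi) g ->
  t * dot (pack (fun a => g a - WbarT W ls a + (xpart xi a - xs a))
                (vsub (lpart xi) ls) (vsub (zpart xi) zs)) v <=
  Vfun W dv fi xs ls zs (fun k => xi k + t * v k) - Vfun W dv fi xs ls zs xi.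
Proof.
move=> t0 Hx sg.
rewrite /Vfun.
have -> : xpart (fun k => xi k + t * v k) = (fun a => xpart xi a + t * xpart v a) by [].
have -> : lpart (fun k => xi k + t * v k) = (fun a => lpart xi a + t * lpart v a) by [].
have -> : zpart (fun k => xi k + t * v k) = (fun a => zpart xi a + t * zpart v a) by [].
rewrite !sqn_shift.
have f1 := sg _ Hx.
have E : dot g (vsub (fun a => xpart xi a + t * xpart v a) (xpart xi)) = t * dot g (xpart v).
  by rewrite /dot /vsub mulr_sumr; apply: eq_bigr => k _; ring.
rewrite E in f1.
have -> : dot ls (fun b => dv b - Wbar W (fun a => xpart xi a + t * xpart v a) b) =
   dot ls (fun b => dv b - Wbar W (xpart xi) b) - t * dot (WbarT W ls) (xpart v).
  rewrite -Wbar_adj /dot mulr_sumr -sumrB; apply: eq_bigr => b _.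
  have -> : Wbar W (fun a => xpart xi a + t * xpart v a) b = Wbar W (xpart xi) b + t * Wbar W (xpart v) b.
    by rewrite /Wbar /blk mulr_sumr -big_split; apply: eq_bigr => l _ /=; ring.
  ring.
rewrite dot_split.
have -> : xpart (pack (fun a => g a - WbarT W ls a + (xpart xi a - xs a))
                (vsub (lpart xi) ls) (vsub (zpart xi) zs)) =
          (fun a => g a - WbarT W ls a + (xpart xi a - xs a)) by [].
have -> : lpart (pack (fun a => g a - WbarT W ls a + (xpart xi a - xs a))
                (vsub (lpart xi) ls) (vsub (zpart xi) zs)) = vsub (lpart xi) ls by [].
have -> : zpart (pack (fun a => g a - WbarT W ls a + (xpart xi a - xs a))
                (vsub (lpart xi) ls) (vsub (zpart xi) zs)) = vsub (zpart xi) zs by [].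
have -> : dot (fun a => g a - WbarT W ls a + (xpart xi a - xs a)) (xpart v) =
   dot g (xpart v) - dot (WbarT W ls) (xpart v) + dot (vsub (xpart xi) xs) (xpart v).
  by rewrite /dot /vsub -sumrB -big_split; apply: eq_bigr => k _ /=; ring.
have s1 : 0 <= t ^+ 2 * sqn (xpart v) by apply: mulr_ge0; [apply: sqr_ge0 | apply: sqn_ge0].
have s2 : 0 <= t ^+ 2 * sqn (lpart v) by apply: mulr_ge0; [apply: sqr_ge0 | apply: sqn_ge0].
have s3 : 0 <= t ^+ 2 * sqn (zpart v) by apply: mulr_ge0; [apply: sqr_ge0 | apply: sqn_ge0].
lra.
Qed.


Lemma sqn_line (T : finType) (u w : T -> R) (t : R) :
  sqn (vsub (fun k => u k + t * w k) u) = t ^+ 2 * sqn w.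
Proof. by rewrite /sqn /dot /vsub mulr_sumr; apply: eq_bigr => k _; ring. Qed.

Lemma clarke_ok n m (q : 'I_n -> nat) (Om U : forall i : 'I_n, ('I_(q i) -> R) -> Prop)
    (fi : forall i : 'I_n, ('I_(q i) -> R) -> R)
    (W : forall i : 'I_n, 'M[R]_(m, q i)) (dv : Lidx n m -> R)
    (xs : Xidx q -> R) (ls zs : Lidx n m -> R)
    (xi : Sidx m q -> R) (g : Xidx q -> R) :
  (forall i, open_set (U i)) -> (forall i y, Om i y -> U i y) -> Omega Om (xpart xi) ->
  subdiff (Omega U) (fsum fi) (xpart xi) g ->
  clarke_grad (Vfun W dv fi xs ls zs) xi
    (pack (fun a => g a - WbarT W ls a + (xpart xi a - xs a))
          (vsub (lpart xi) ls) (vsub (zpart xi) zs)).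
Proof.
move=> Uo OU Ox sg v e e0 delta d0.
have [t0 t00 Ht] : exists2 t0 : R, 0 < t0 & forall i t, 0 < t -> t < t0 ->
    U i (fun l => blk (xpart xi) i l + t * blk (xpart v) i l).
  apply: ev_all => i.
  have [r r0 Hr] := Uo i _ (OU i _ (Ox i)).
  set S := sqn (blk (xpart v) i).
  have S0 : 0 <= S by apply: sqn_ge0.
  exists (Num.min 1 (r / (S + 1))); first by rewrite lt_min ltr01 divr_gt0 //; lra.
  move=> t tp; rewrite lt_min => /andP [t1 tr].
  apply: Hr; rewrite sqn_line -/S.
  rewrite ltr_pdivlMr in tr; last by lra.
  have : 0 <= (1 - t) * t * S by apply: mulr_ge0 => //; apply: mulr_ge0; lra.
  nra.
set t := Num.min t0 delta / 2.
have mp : 0 < Num.min t0 delta by rewrite lt_min t00 d0.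
have tp : 0 < t by rewrite /t; lra.
have tm : t < Num.min t0 delta by rewrite /t; lra.
have tt0 : t < t0 by move: tm; rewrite lt_min => /andP [].
have td : t < delta by move: tm; rewrite lt_min => /andP [].
exists xi, t; split => //.
  rewrite /sqn /dot big1 // => k _; by rewrite /vsub subrr mul0r.
have Hx : Omega U (fun a => xpart xi a + t * xpart v a) by move=> i; exact: Ht.
have := @Vdiff n m q U fi W dv xs ls zs xi v g t tp Hx sg.
rewrite -ler_pdivlMl // mulrC => h.
lra.
Qed.


Lemma Lkron_sub n m (L : 'M[R]_n) (u w : Lidx n m -> R) b :
  Lkron L (vsub u w) b = Lkron L u b - Lkron L w b.
Proof. by rewrite /Lkron /vsub -sumrB; apply: eq_bigr => j _; ring. Qed.

Lemma WbarT_sub n m (q : 'I_n -> nat) (W : forall i, 'M[R]_(m, q i)) (u w : Lidx n m -> R) a :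
  WbarT W (vsub u w) a = WbarT W u a - WbarT W w a.
Proof. by rewrite /WbarT /vsub -sumrB; apply: eq_bigr => j _; ring. Qed.

Lemma Wbar_3 n m (q : 'I_n -> nat) (W : forall i, 'M[R]_(m, q i)) (u w r : Xidx q -> R) b :
  Wbar W (fun a => u a - w a + r a) b = Wbar W u b - Wbar W w b + Wbar W r b.
Proof. by rewrite /Wbar /blk -sumrB -big_split; apply: eq_bigr => j _ /=; ring. Qed.

Lemma Omega_convex n (q : 'I_n -> nat) (Om : forall i : 'I_n, ('I_(q i) -> R) -> Prop) :
  (forall i, convex_set (Om i)) -> convex_set (Omega Om).
Proof. by move=> H u v Hu Hv t t0 t1 i; apply: H. Qed.

End H.

Theorem lemma8 (R : realType) (n m : nat) (q : 'I_n -> nat)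
    (A : 'M[R]_n)
    (Om U : forall i : 'I_n, ('I_(q i) -> R) -> Prop)
    (fi : forall i : 'I_n, ('I_(q i) -> R) -> R)
    (W : forall i : 'I_n, 'M[R]_(m, q i))
    (d : 'I_n -> 'I_m -> R) (d0 : 'I_m -> R)
    (xs : Xidx q -> R) (ls zs : Lidx n m -> R)
    (xi : Sidx m q -> R) (a : R) :
  undirected_weighted_graph A -> graph_connected A ->
  (forall i, closed_set (Om i) /\ convex_set (Om i)) ->
  (forall i, [/\ open_set (U i), convex_set (U i),
                 (forall y, Om i y -> U i y) &
                 strictly_convex_on (U i) (fi i)]) ->
  (forall k, \sum_(i < n) d i k = d0 k) ->
  (* Slater's condition *)
  (exists2 x0 : Xidx q -> R, relint (Omega Om) x0 & forall k, Wrow W x0 k = d0 k) ->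
  let dv : Lidx n m -> R := fun ik => d ik.1 ik.2 in
  let F := Fmap (laplacian A) W dv Om U fi in
  (forall xi', Omega Om (xpart xi') -> convex_set (F xi')) ->
  (* (xs, ls, zs) is an equilibrium *)
  Omega Om xs -> F (pack xs ls zs) (fun _ => 0) ->
  Omega Om (xpart xi) ->
  lie_deriv F (Vfun W dv fi xs ls zs) xi a ->
  exists gx gs : Xidx q -> R,
    [/\ subdiff (Omega U) (fsum fi) (xpart xi) gx,
        subdiff (Omega U) (fsum fi) xs gs &
        exists2 pi, is_proj (Omega Om)
                      (fun b => xpart xi b - gx b + WbarT W (lpart xi) b) pi &
          let p := vsub pi (xpart xi) in
          a <= - sqn p - dot (vsub (xpart xi) xs) (vsub gx gs)
               - dot (lpart xi) (Lkron (laplacian A) (lpart xi))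
          /\ - sqn p - dot (vsub (xpart xi) xs) (vsub gx gs)
               - dot (lpart xi) (Lkron (laplacian A) (lpart xi)) <= 0].
Proof.
move=> HG Hconn HOm HU Hd Hsl dv F Fconv Oxs Feq Ox [v Fv Hcl].
have [As A0 Aii] := HG.
case: Fv => g [pi [sg pr veq]].
case: Feq => gs [pis [sgs prs eq0]].
cbv zeta in veq, eq0.
have pk1 : xpart (pack xs ls zs) = xs by [].
have pk2 : lpart (pack xs ls zs) = ls by [].
have pk3 : zpart (pack xs ls zs) = zs by [].
rewrite pk1 pk2 pk3 in eq0 sgs prs.
set x := xpart xi in sg pr veq Ox *.
set lam := lpart xi in pr veq *.
set z := zpart xi in veq *.
set L := laplacian A in veq eq0 *.
have E1 : forall a, pis a = xs a.
  move=> a0; have := congr1 (fun f => f (inl a0)) eq0; rewrite /= /vsub => h; lra.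
have E3 : forall b, Lkron L ls b = 0.
  by move=> b; have := congr1 (fun f => f (inr (inr b))) eq0; rewrite /=.
have E2 : forall b, dv b = Wbar W xs b + Lkron L zs b.
  move=> b; have := congr1 (fun f => f (inr (inl b))) eq0; rewrite /=.
  have -> : Wbar W (vsub pis xs) b = 0.
    by rewrite /Wbar big1 // => l _; rewrite /blk /vsub /= E1 subrr mulr0.
  rewrite E3 => h; lra.
have Uo : forall i, open_set (U i) by move=> i; case: (HU i).
have OU : forall i y, Om i y -> U i y by move=> i; case: (HU i).
have Pc := @clarke_ok R n m q Om U fi W dv xs ls zs xi g Uo OU Ox sg.
have aE := Hcl _ Pc.
rewrite veq dot_pack in aE.
set p := vsub pi x in aE *.
set mu := vsub lam ls.
set w := fun a => x a - xs a + p a.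
have T2 : dot mu (fun b => dv b - Wbar W x b - Lkron L lam b - Lkron L z b - Wbar W p b)
   = - dot (WbarT W mu) w - dot (vsub z zs) (Lkron L lam) - dot lam (Lkron L lam).
  have -> : dot mu (fun b => dv b - Wbar W x b - Lkron L lam b - Lkron L z b - Wbar W p b)
     = - dot mu (Wbar W w) - dot mu (Lkron L (vsub z zs)) - dot mu (Lkron L mu).
    rewrite /dot -!sumrN -!big_split /=; apply: eq_bigr => b _.
    rewrite /w Wbar_3 !Lkron_sub E2 E3; ring.
  have LmE : forall b, Lkron L mu b = Lkron L lam b by move=> b; rewrite Lkron_sub E3 subr0.
  have e1 : dot mu (Lkron L (vsub z zs)) = dot (vsub z zs) (Lkron L lam).
    rewrite (Lsym _ _ As); by apply: eq_bigr => b _; rewrite LmE.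
  have e2 : dot mu (Lkron L mu) = dot lam (Lkron L lam).
    have -> : dot mu (Lkron L mu) = dot mu (Lkron L lam) by apply: eq_bigr => b _; rewrite LmE.
    rewrite (Lsym _ _ As).
    by apply: eq_bigr => b _; rewrite LmE.
  by rewrite Wbar_adj e1 e2.
rewrite T2 in aE.
have Oc : convex_set (Omega Om) by apply: Omega_convex => i; case: (HOm i).
have VI1 := proj_vi Oc pr Oxs.
have VI2 := proj_vi Oc prs Ox.
have Uxs : Omega U xs by move=> i; apply: OU; apply: Oxs.
have Ux : Omega U x by move=> i; apply: OU; apply: Ox.
have m1 := sg _ Uxs.
have m2 := sgs _ Ux.
have mono : dot (vsub x xs) (vsub g gs) = - (dot g (vsub xs x) + dot gs (vsub x xs)).
  rewrite /dot -big_split -sumrN /=; apply: eq_bigr => k _; rewrite /vsub /=; ring.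
have key : - sqn p - dot (vsub x xs) (vsub g gs) -
   (dot (fun a => g a - WbarT W ls a + (x a - xs a)) p - dot (WbarT W mu) w) =
   - dot (vsub (fun b => x b - g b + WbarT W lam b) pi) (vsub xs pi)
   - dot (vsub (fun b => xs b - gs b + WbarT W ls b) pis)
         (vsub x pis).
  rewrite /dot /sqn -!sumrN -!big_split -?sumrN -?big_split /=; apply: eq_bigr => k _.
  rewrite /w /p /mu WbarT_sub /vsub /= E1; ring.
have psd := Lpsd lam HG.
have sq := sqn_ge0 p.
exists g, gs; split => //.
exists pi => //.
cbv zeta; split; lra.
Qed.
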